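(* Consider the adaptive LP decoding algorithm described in the context, run on a binary linear code with parity-check matrix $H$ and log-likelihood vector $\underline\gamma\in\mathbb{R}^n$ with $\gamma_i\neq 0$ for all $i$. If at some iteration no cut is found at the current solution $\underline x$ (Step 3 finds no violated parity-check constraint), then $\underline x$ is an optimal solution of the LP decoding problem $\min\{\underline\gamma^T\underline x:\underline x\in\mathscr P\}$, where $\mathscr P$ is the fundamental polytope.
   Context: Let $H$ be an $m\times n$ binary parity-check matrix; for row $j$, $N(j)=\{i: H_{ji}=1\}$. The fundamental polytope $\mathscr P$ is the set of $\underline x\in\mathbb R^n$ with $0\le x_i\le 1$ for all $i$ and, for each $j=1,\dots,m$ and each odd-sized $V\subseteq N(j)$, $\sum_{i\in V}x_i-\sum_{i\in N(j)\setminus V}x_i\le |V|-1$ (parity-check constraints). A constraint is a cut at a point if it is violated there. Adaptive LP decoding: Step 1: form an initial LP minimizing $\underline\gamma^T\underline x$ subject to, for each $i$, the single constraint $0\le x_i$ if $\gamma_i>0$, or $x_i\le 1$ if $\gamma_i<0$. Step 2: solve the current LP, obtaining an optimal solution $\underline x$. Step 3: find all parity-check constraints (over all check nodes $j$ and odd $V\subseteq N(j)$) that are cuts at $\underline x$. Step 4: if any cuts were found, add them to the current LP's constraints and return to Step 2; otherwise output $\underline x$ and stop. *)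

(* Defs.v *)
From mathcomp Require Import all_boot all_order all_algebra.
Set Implicit Arguments. Unset Strict Implicit. Unset Printing Implicit Defensive.
Import Order.TTheory GRing.Theory Num.Theory.
Local Open Scope ring_scope.

Section LPDecoding.
Variables (R : realFieldType) (m n : nat).
(* binary parity-check matrix: H j i = true iff H_{ji} = 1 *)
Variable H : 'M[bool]_(m, n).

Definition Nset (j : 'I_m) : {set 'I_n} := [set i | H j i].

Definition is_pc (j : 'I_m) (V : {set 'I_n}) : bool :=
  (V \subset Nset j) && odd #|V|.

Definition pc_holds (x : 'I_n -> R) (j : 'I_m) (V : {set 'I_n}) : bool :=
  \sum_(i in V) x i - \sum_(i in Nset j :\: V) x i <= #|V|%:R - 1.

Definition is_cut (x : 'I_n -> R) (j : 'I_m) (V : {set 'I_n}) : bool :=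
  is_pc j V && ~~ pc_holds x j V.

Definition in_polytope (x : 'I_n -> R) : Prop :=
  (forall i, 0 <= x i <= 1) /\
  (forall j V, is_pc j V -> pc_holds x j V).

Definition obj (gamma x : 'I_n -> R) : R := \sum_i gamma i * x i.

(* Step 1 constraints *)
Definition init_ok (gamma x : 'I_n -> R) : Prop :=
  forall i, (0 < gamma i -> 0 <= x i) /\ (gamma i < 0 -> x i <= 1).

(* Feasible set of the LP solved at iteration k of a run whose successive
   optimal solutions are xs 0, xs 1, ...: the initial constraints plus all
   cuts found at the solutions of iterations 0..k-1. *)
Definition adaptive_feasible (gamma : 'I_n -> R) (xs : nat -> 'I_n -> R)
  (k : nat) (y : 'I_n -> R) : Prop :=
  init_ok gamma y /\
  (forall l j V, (l < k)%N -> is_cut (xs l) j V -> pc_holds y j V).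

Definition adaptive_optimal (gamma : 'I_n -> R) (xs : nat -> 'I_n -> R)
  (k : nat) (y : 'I_n -> R) : Prop :=
  adaptive_feasible gamma xs k y /\
  (forall z, adaptive_feasible gamma xs k z -> obj gamma y <= obj gamma z).

End LPDecoding.

(* Main.v *)
Require Import Defs.
From mathcomp Require Import all_boot all_order all_algebra.
From mathcomp Require Import lra.
Import Order.TTheory GRing.Theory Num.Theory.
Local Open Scope ring_scope.
Set Implicit Arguments.

Section Aux.
Variables (R : realFieldType) (m n : nat) (H : 'M[bool]_(m, n)).

Definition clampv (x : 'I_n -> R) (i : 'I_n) : R :=
  if x i < 0 then 0 else if 1 < x i then 1 else x i.

Lemma clamp_ge0 x i : 0 <= clampv x i.
Proof. by rewrite /clampv; case: ltrP => h1; case: ltrP => h2 //=; lra. Qed.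

Lemma clamp_le1 x i : clampv x i <= 1.
Proof. by rewrite /clampv; case: ltrP => h1; case: ltrP => h2 //=; lra. Qed.

Lemma clamp_pc x j V : is_pc H j V -> pc_holds H x j V -> pc_holds H (clampv x) j V.
Proof.
move=> hpc hx; rewrite /pc_holds.
have hV1 : \sum_(i in V) clampv x i <= #|V|%:R.
  rewrite -sumr_const; apply: ler_sum => i _; exact: clamp_le1.
have hN0 : 0 <= \sum_(i in Nset H j :\: V) clampv x i.
  by apply: sumr_ge0 => i _; exact: clamp_ge0.
case: (pickP (fun k => (k \in V) && (x k < 0))) => [k /andP[kV xk]|nA].
  rewrite (bigD1 k) //=.
  have ck : clampv x k = 0 by rewrite /clampv xk.
  have hc : \sum_(i in V | i != k) clampv x i <= #|V|%:R - 1.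
    have e : (#|V|%:R : R) = 1 + \sum_(i in V | i != k) 1.
      by rewrite -sumr_const (bigD1 k).
    have hs : \sum_(i in V | i != k) clampv x i <= \sum_(i in V | i != k) (1:R).
      by apply: ler_sum => i _; exact: clamp_le1.
    rewrite e; lra.
  rewrite ck; lra.
case: (pickP (fun k => (k \in Nset H j :\: V) && (1 < x k))) => [k /andP[kV xk]|nB].
  move: hN0; rewrite (bigD1 k) //= => hN0.
  have ck : clampv x k = 1.
    rewrite /clampv xk; case: ltrP => //; lra.
  have h0 : 0 <= \sum_(i in Nset H j :\: V | i != k) clampv x i.
    by apply: sumr_ge0 => i _; exact: clamp_ge0.
  rewrite ck; lra.
have h1 : \sum_(i in V) clampv x i <= \sum_(i in V) x i.
  apply: ler_sum => i iV; move: (nA i); rewrite iV /= /clampv => ->.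
  case: ltrP => hh //; lra.
have h2 : \sum_(i in Nset H j :\: V) x i <= \sum_(i in Nset H j :\: V) clampv x i.
  apply: ler_sum => i iV; move: (nB i); rewrite iV /= /clampv => ->.
  case: ltrP => hh //; lra.
move: hx; rewrite /pc_holds; lra.
Qed.

End Aux.
Arguments clampv {R n} x i.
Arguments clamp_ge0 {R n} x i.
Arguments clamp_le1 {R n} x i.
Arguments clamp_pc {R m n H} x j V.

Theorem lemma1 (R : realFieldType) (m n : nat) (H : 'M[bool]_(m, n))
  (gamma : 'I_n -> R) (hgamma : forall i, gamma i != 0)
  (xs : nat -> 'I_n -> R) (t : nat)
  (hopt : forall k, (k <= t)%N -> adaptive_optimal H gamma xs k (xs k))
  (hcuts : forall l, (l < t)%N -> exists j V, is_cut H (xs l) j V)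
  (hnocut : forall j V, ~~ is_cut H (xs t) j V) :
  in_polytope H (xs t) /\
  (forall y, in_polytope H y -> obj gamma (xs t) <= obj gamma y).
Proof.
have [[hinit hfeas] hmin] := hopt t (leqnn t).
set x := xs t in hinit hfeas hmin hnocut *.
have hpc : forall j V, is_pc H j V -> pc_holds H x j V.
  move=> j V h; move: (hnocut j V); rewrite /is_cut h /=.
  by move/negPn.
have polyfeas : forall y, in_polytope H y -> adaptive_feasible H gamma xs t y.
  move=> y [hb hp]; split.
    move=> i; have /andP[a b] := hb i; by split.
  move=> l j V _ /andP[h _]; exact: hp.
have cfeas : adaptive_feasible H gamma xs t (clampv x).
  apply: polyfeas; split.
    move=> i; by rewrite clamp_ge0 clamp_le1.
  move=> j V h; apply: clamp_pc => //; exact: hpc.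
have hobj := hmin _ cfeas.
have hterm : forall i, gamma i * clampv x i <= gamma i * x i.
  move=> i; have [h1 h2] := hinit i; rewrite /clampv.
  case: (ltrgt0P (gamma i)) => g.
  - have := h1 g => xi; case: ltrP => a; first lra.
    case: ltrP => b //; apply: ler_wpM2l; lra.
  - have := h2 g => xi; case: ltrP => a.
      rewrite mulr0; apply: mulr_le0; lra.
    case: ltrP => b //; lra.
  - by rewrite g !mul0r.
have hbox : forall i, 0 <= x i <= 1.
  move=> i; apply/negPn/negP => hn.
  have hlt : gamma i * clampv x i < gamma i * x i.
    have [h1 h2] := hinit i; rewrite /clampv.
    case: (ltrgt0P (gamma i)) => g.
    - have := h1 g => xi; case: (ltrP (x i) 0) => a; first lra.
      case: (ltrP 1 (x i)) => b.
        by rewrite ltr_pM2l.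
      by move: hn; rewrite xi b.
    - have := h2 g => xi; case: (ltrP (x i) 0) => a.
        by rewrite mulr0 nmulr_rgt0.
      case: (ltrP 1 (x i)) => b; first lra.
      by move: hn; rewrite a xi.
    - by move: (hgamma i); rewrite g eqxx.
  have : obj gamma (clampv x) < obj gamma x.
    rewrite /obj (bigD1 i) //= [X in _ < X](bigD1 i) //=.
    apply: ltr_leD => //; apply: ler_sum => k _; exact: hterm.
  by rewrite ltNge hobj.
split; first by split.
move=> y hy; exact: hmin _ (polyfeas y hy).
Qed.
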